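(* There exist a topologically regular compact set $K\subseteq\mathbb{R}^2$ and a function $F\in C^1_{\mathrm{int}}(K)$ such that $F\notin C^1(K)$. More precisely, there is a rectifiable path $\gamma:[0,1]\to K$ with $\int_\gamma dF=0$ while $F(\gamma(1))-F(\gamma(0))=1$, where $dF$ denotes the continuous extension to $K$ of the derivative of $F$ on the interior of $K$.
   Context: A compact set $K$ is topologically regular if it is the closure of its interior $\mathring K$. $C^1_{\mathrm{int}}(K)$ is the set of functions $f\in C^1(\mathring K)$ (classical continuously differentiable functions on the open set $\mathring K$) such that $f$ and its derivative $df$ extend continuously to $K$. $C^1(K)$ is the set of $f:K\to\mathbb{R}$ admitting a continuous $df:K\to\mathbb{R}^2$ with $\lim_{y\to x,\,y\in K\setminus\{x\}}\frac{f(y)-f(x)-\langle df(x),y-x\rangle}{|y-x|}=0$ for all $x\in K$. Rectifiable paths (continuous maps of finite length) and path integrals $\int_\gamma F$ (limits of Riemann–Stieltjes sums $\sum_j\langle F(\gamma(\tau_j)),\gamma(t_j)-\gamma(t_{j-1})\rangle$) are as usual. *)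

(* Defs.v *)
From Stdlib Require Export Reals Lra.
Open Scope R_scope.

Definition pt : Type := (R * R)%type.

Definition padd (x y : pt) : pt := (fst x + fst y, snd x + snd y).
Definition psub (x y : pt) : pt := (fst x - fst y, snd x - snd y).
Definition inner (x y : pt) : R := fst x * fst y + snd x * snd y.
Definition pnorm (x : pt) : R := sqrt (inner x x).
Definition pdist (x y : pt) : R := pnorm (psub x y).

Definition interior (K : pt -> Prop) (x : pt) : Prop :=
  exists e, 0 < e /\ forall y, pdist y x < e -> K y.
Definition closure (A : pt -> Prop) (x : pt) : Prop :=
  forall e, 0 < e -> exists y, A y /\ pdist y x < e.
Definition closed_set (A : pt -> Prop) : Prop := forall x, closure A x -> A x.
Definition bounded_set (A : pt -> Prop) : Prop :=
  exists M, forall x, A x -> pnorm x <= M.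
(* compact subset of R^2 (Heine-Borel: closed and bounded) *)
Definition compact_set (K : pt -> Prop) : Prop := closed_set K /\ bounded_set K.

Definition top_regular (K : pt -> Prop) : Prop :=
  forall x, K x <-> closure (interior K) x.

Definition cont_on_R (A : pt -> Prop) (f : pt -> R) : Prop :=
  forall x, A x -> forall e, 0 < e -> exists d, 0 < d /\
    forall y, A y -> pdist y x < d -> Rabs (f y - f x) < e.
Definition cont_on_pt (A : pt -> Prop) (f : pt -> pt) : Prop :=
  forall x, A x -> forall e, 0 < e -> exists d, 0 < d /\
    forall y, A y -> pdist y x < d -> pdist (f y) (f x) < e.

Definition has_deriv_at (f : pt -> R) (x L : pt) : Prop :=
  forall e, 0 < e -> exists d, 0 < d /\
    forall y, y <> x -> pdist y x < d ->
      Rabs (f y - f x - inner L (psub y x)) <= e * pdist y x.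

(* C^1_int(K): F restricted to the interior is C^1 with derivative dF there,
   and F, dF (given on all of K) are continuous on K, i.e. they are the
   continuous extensions to K. *)
Definition C1_int (K : pt -> Prop) (F : pt -> R) (dF : pt -> pt) : Prop :=
  (forall x, interior K x -> has_deriv_at F x (dF x)) /\
  cont_on_pt (interior K) dF /\
  cont_on_R K F /\ cont_on_pt K dF.

(* Whitney-type C^1(K) *)
Definition C1_on (K : pt -> Prop) (f : pt -> R) : Prop :=
  exists df : pt -> pt, cont_on_pt K df /\
    forall x, K x -> forall e, 0 < e -> exists d, 0 < d /\
      forall y, K y -> y <> x -> pdist y x < d ->
        Rabs (f y - f x - inner (df x) (psub y x)) <= e * pdist y x.

Definition path_continuous (g : R -> pt) : Prop :=
  forall t, 0 <= t <= 1 -> forall e, 0 < e -> exists d, 0 < d /\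
    forall s, 0 <= s <= 1 -> Rabs (s - t) < d -> pdist (g s) (g t) < e.

Fixpoint rsum (f : nat -> R) (n : nat) : R :=
  match n with O => 0 | S m => rsum f m + f m end.

Definition partition01 (t : nat -> R) (n : nat) : Prop :=
  t O = 0 /\ t n = 1 /\ forall i, (i < n)%nat -> t i <= t (S i).

Definition rectifiable (g : R -> pt) : Prop :=
  path_continuous g /\
  exists M, forall t n, partition01 t n ->
    rsum (fun i => pdist (g (t (S i))) (g (t i))) n <= M.

Definition path_integral_is (G : pt -> pt) (g : R -> pt) (I : R) : Prop :=
  forall e, 0 < e -> exists d, 0 < d /\
    forall (t tau : nat -> R) (n : nat), partition01 t n ->
      (forall i, (i < n)%nat -> t (S i) - t i < d) ->
      (forall i, (i < n)%nat -> t i <= tau i <= t (S i)) ->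
      Rabs (rsum (fun i => inner (G (g (tau i))) (psub (g (t (S i))) (g (t i)))) n - I) < e.

(* Main.v *)
Require Import Defs.
From Stdlib Require Import Lia Psatz ZArith.
Open Scope R_scope.

Ltac rabs_elim := repeat match goal with
 | |- context [Rabs ?a] => let h := fresh "ha" in destruct (Rcase_abs a) as [h|h];
      [rewrite (Rabs_left a h) in * | rewrite (Rabs_right a h) in *]
 | H : context [Rabs ?a] |- _ => let h := fresh "ha" in destruct (Rcase_abs a) as [h|h];
      [rewrite (Rabs_left a h) in * | rewrite (Rabs_right a h) in *]
 end.

Lemma pow_le1 x n : 0 <= x <= 1 -> x ^ n <= 1.
Proof. intros. rewrite <- (pow1 n). apply pow_incr; lra. Qed.

Definition f0 (x : R) : R := Rmax 0 (Rmin 1 x).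
Definition Tc (g : R -> R) (x : R) : R := (g (3*x) + g (3*x-2)) / 2.
Fixpoint fn (k : nat) : R -> R := match k with O => f0 | S k => Tc (fn k) end.

Definition Good (g : R -> R) : Prop :=
  (forall x, x <= 0 -> g x = 0) /\ (forall x, 1 <= x -> g x = 1) /\ (forall x, 0 <= g x <= 1).

Lemma f0_good : Good f0.
Proof.
  unfold Good, f0, Rmax, Rmin; repeat split; intros;
  repeat (destruct Rle_dec); lra.
Qed.

Lemma Tc_good g : Good g -> Good (Tc g).
Proof.
  intros [H0 [H1 H2]]; unfold Tc; repeat split; intros.
  - rewrite !H0 by lra; lra.
  - rewrite !H1 by lra; lra.
  - pose proof (H2 (3*x)); pose proof (H2 (3*x-2)); lra.
  - pose proof (H2 (3*x)); pose proof (H2 (3*x-2)); lra.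
Qed.

Lemma fn_good k : Good (fn k).
Proof. induction k; simpl. apply f0_good. now apply Tc_good. Qed.

Lemma fn_step k : forall x, Rabs (fn (S k) x - fn k x) <= (1/2)^k.
Proof.
  induction k; intros x.
  - simpl pow. destruct (fn_good 1) as [_ [_ A]]. destruct (fn_good 0) as [_ [_ B]].
    specialize (A x); specialize (B x). rabs_elim; lra.
  - change (fn (S (S k)) x) with (Tc (fn (S k)) x).
    change (fn (S k) x) with (Tc (fn k) x). unfold Tc. simpl pow.
    destruct (fn_good (S k)) as [A0 [A1 _]]. destruct (fn_good k) as [B0 [B1 _]].
    destruct (Rle_dec x (1/3)).
    + rewrite (A0 (3*x-2)), (B0 (3*x-2)) by lra.
      specialize (IHk (3*x)). rabs_elim; lra.
    + rewrite (A1 (3*x)), (B1 (3*x)) by lra.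
      specialize (IHk (3*x-2)). rabs_elim; lra.
Qed.

Lemma f0_lip x y : Rabs (f0 x - f0 y) <= Rabs (x - y).
Proof. unfold f0, Rmax, Rmin; repeat destruct Rle_dec; rabs_elim; lra. Qed.

Lemma fn_mod k : forall j x y, Rabs (x - y) <= (1/3)^j -> Rabs (fn k x - fn k y) <= (1/2)^j.
Proof.
  induction k; intros j x y H.
  - simpl. eapply Rle_trans. apply f0_lip. eapply Rle_trans. apply H.
    apply pow_incr; lra.
  - change (fn (S k) x) with (Tc (fn k) x). change (fn (S k) y) with (Tc (fn k) y).
    unfold Tc. destruct (fn_good k) as [A0 [A1 A2]].
    destruct j as [|j].
    + simpl pow. pose proof (A2 (3*x)); pose proof (A2 (3*x-2));
      pose proof (A2 (3*y)); pose proof (A2 (3*y-2)). rabs_elim; lra.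
    + simpl pow in *.
      assert (Hp : 0 < (1/3)^j) by (apply pow_lt; lra).
      assert (Hq : (1/3)^j <= 1) by (apply pow_le1; lra).
      destruct (Rle_dec (1/3) x) as [hx|hx]; [destruct (Rle_dec (1/3) y) as [hy|hy]|].
      * rewrite (A1 (3*x)), (A1 (3*y)) by lra.
        assert (Rabs ((3*x-2) - (3*y-2)) <= (1/3)^j) by (rabs_elim; lra).
        specialize (IHk j _ _ H0). rabs_elim; lra.
      * rewrite (A0 (3*x-2)), (A0 (3*y-2)) by (rabs_elim; lra).
        assert (Rabs ((3*x) - (3*y)) <= (1/3)^j) by (rabs_elim; lra).
        specialize (IHk j _ _ H0). rabs_elim; lra.
      * rewrite (A0 (3*x-2)), (A0 (3*y-2)) by (rabs_elim; lra).
        assert (Rabs ((3*x) - (3*y)) <= (1/3)^j) by (rabs_elim; lra).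
        specialize (IHk j _ _ H0). rabs_elim; lra.
Qed.

Lemma fn_cauchy_bound k : forall p x, Rabs (fn (k+p) x - fn k x) <= 2*(1/2)^k - 2*(1/2)^(k+p).
Proof.
  induction p; intros x.
  - rewrite Nat.add_0_r. rabs_elim; lra.
  - rewrite Nat.add_succ_r. specialize (IHp x). pose proof (fn_step (k+p) x).
    simpl pow. rabs_elim; lra.
Qed.

Lemma fn_cauchy_le k m x : (k <= m)%nat -> Rabs (fn m x - fn k x) <= 2*(1/2)^k.
Proof.
  intros H. replace m with (k + (m-k))%nat by lia.
  pose proof (fn_cauchy_bound k (m-k) x).
  assert (0 < (1/2)^(k+(m-k))) by (apply pow_lt; lra). lra.
Qed.

Lemma small_pow_all e : 0 < e -> exists N, forall n, (n >= N)%nat -> (1/2)^n < e.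
Proof.
  intros He. destruct (pow_lt_1_zero (1/2)) with (y:=e) as [N HN].
  rewrite Rabs_pos_eq; lra. assumption.
  exists N. intros n Hn. specialize (HN n Hn). rewrite Rabs_pos_eq in HN. auto.
  apply pow_le; lra.
Qed.

Lemma fn_cauchy x : Cauchy_crit (fun k => fn k x).
Proof.
  intros e He. destruct (small_pow_all (e/2)) as [N HN]. lra.
  exists N. intros n m Hn Hm. unfold Rdist.
  destruct (Nat.le_ge_cases n m).
  - pose proof (fn_cauchy_le n m x H). specialize (HN n Hn). rabs_elim; lra.
  - pose proof (fn_cauchy_le m n x H). specialize (HN m Hm). rabs_elim; lra.
Qed.

Definition f (x : R) : R := proj1_sig (R_complete (fun k => fn k x) (fn_cauchy x)).

Lemma le_eps a b : (forall e, 0 < e -> a < b + e) -> a <= b.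
Proof. intros H. destruct (Rle_dec a b); auto. specialize (H (a-b)). lra. Qed.

Lemma f_approx k x : Rabs (f x - fn k x) <= 2*(1/2)^k.
Proof.
  unfold f. destruct (R_complete (fun k => fn k x) (fn_cauchy x)) as [l Hl]. simpl.
  apply le_eps. intros e He. destruct (Hl e He) as [N HN].
  specialize (HN (Nat.max N k) (Nat.le_max_l _ _)). unfold Rdist in HN.
  pose proof (fn_cauchy_le k (Nat.max N k) x (Nat.le_max_r _ _)).
  rabs_elim; lra.
Qed.

Lemma le_geom a b : (forall k, a <= b + 4*(1/2)^k) -> a <= b.
Proof.
  intros H. apply le_eps. intros e He. destruct (small_pow_all (e/8)) as [N HN]. lra.
  specialize (H N). specialize (HN N (le_n _)). lra.
Qed.

Lemma f_le0 x : x <= 0 -> f x = 0.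
Proof.
  intros Hx. destruct (fn_good 0) as [A _].
  assert (Rabs (f x) <= 0).
  { apply le_geom. intros k. pose proof (f_approx k x). destruct (fn_good k) as [B _].
    rewrite B in H by lra. assert (0 < (1/2)^k) by (apply pow_lt; lra). rewrite Rminus_0_r in H. lra. }
  pose proof (Rabs_pos (f x)). rabs_elim; lra.
Qed.

Lemma f_ge1 x : 1 <= x -> f x = 1.
Proof.
  intros Hx.
  assert (Rabs (f x - 1) <= 0).
  { apply le_geom. intros k. pose proof (f_approx k x). destruct (fn_good k) as [_ [B _]].
    rewrite B in H by lra. assert (0 < (1/2)^k) by (apply pow_lt; lra). lra. }
  pose proof (Rabs_pos (f x - 1)). rabs_elim; lra.
Qed.

Lemma f_eq x : f x = (f (3*x) + f (3*x-2)) / 2.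
Proof.
  assert (Rabs (f x - (f (3*x) + f (3*x-2)) / 2) <= 0).
  { apply le_geom. intros k. pose proof (f_approx (S k) x).
    pose proof (f_approx k (3*x)). pose proof (f_approx k (3*x-2)).
    change (fn (S k) x) with (Tc (fn k) x) in H. unfold Tc in H. simpl pow in H.
    assert (0 < (1/2)^k) by (apply pow_lt; lra). rabs_elim; lra. }
  pose proof (Rabs_pos (f x - (f (3*x) + f (3*x-2)) / 2)). rabs_elim; lra.
Qed.

Lemma f_mod j x y : Rabs (x - y) <= (1/3)^j -> Rabs (f x - f y) <= (1/2)^j.
Proof.
  intros H. apply le_geom. intros k. pose proof (fn_mod k j x y H).
  pose proof (f_approx k x). pose proof (f_approx k y). rabs_elim; lra.
Qed.

Lemma f_cont e : 0 < e -> exists d, 0 < d /\ forall a b, Rabs (a - b) < d -> Rabs (f a - f b) < e.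
Proof.
  intros He. destruct (small_pow_all e He) as [N HN]. exists ((1/3)^N). split.
  apply pow_lt; lra. intros a b Hab. eapply Rle_lt_trans. apply f_mod. left; eauto. apply HN; lia.
Qed.

Lemma f_third k : f ((1/3)^k) = (1/2)^k.
Proof.
  induction k. simpl. apply f_ge1; lra.
  rewrite f_eq. simpl pow. rewrite (f_le0 (3 * (1/3 * (1/3)^k) - 2)).
  replace (3 * (1/3 * (1/3)^k)) with ((1/3)^k) by field. rewrite IHk. lra.
  pose proof (pow_le1 (1/3) k). lra.
Qed.

Lemma MT k : forall (m : Z) z, 3 * IZR m + 1 <= z * 3^(S k) <= 3 * IZR m + 2 ->
  f z = f ((3 * IZR m + 1) / 3^(S k)).
Proof.
  induction k; intros m z Hz.
  - simpl pow in *. rewrite (f_eq z), (f_eq ((3 * IZR m + 1) / (3*1))).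
    destruct (Z_lt_le_dec m 0) as [h|h].
    + assert (IZR m <= -1) by (apply IZR_le; lia).
      rewrite !f_le0; try lra; unfold Rdiv; lra.
    + destruct (Z.eq_dec m 0) as [->|h'].
      * simpl IZR in *. rewrite (f_ge1 (3*z)), (f_le0 (3*z-2)) by lra.
        rewrite f_ge1, f_le0; lra.
      * assert (1 <= IZR m) by (apply IZR_le; lia).
        rewrite !f_ge1; try lra; unfold Rdiv; lra.
  - assert (HP : 0 < 3^k) by (apply pow_lt; lra).
    set (m' := (m - 2 * 3 ^ Z.of_nat k)%Z).
    assert (Hm' : IZR m' = IZR m - 2 * 3^k).
    { unfold m'. rewrite minus_IZR, mult_IZR, <- pow_IZR. reflexivity. }
    simpl pow in *.
    rewrite (f_eq z), (f_eq ((3 * IZR m + 1) / (3 * (3 * 3^k)))).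
    rewrite (IHk m (3*z)) by (simpl pow; nra).
    rewrite (IHk m' (3*z-2)) by (simpl pow; rewrite Hm'; nra).
    rewrite (IHk m (3 * ((3 * IZR m + 1) / (3 * (3 * 3 ^ k))))).
    rewrite (IHk m' (3 * ((3 * IZR m + 1) / (3 * (3 * 3 ^ k))) - 2)). reflexivity.
    + simpl pow. rewrite Hm'.
      replace ((3 * ((3 * IZR m + 1) / (3 * (3 * 3 ^ k))) - 2) * (3 * 3 ^ k)) with (3 * IZR m + 1 - 6 * 3^k) by (field; lra).
      lra.
    + simpl pow.
      replace (3 * ((3 * IZR m + 1) / (3 * (3 * 3 ^ k))) * (3 * 3 ^ k)) with (3 * IZR m + 1) by (field; lra).
      lra.
Qed.

Lemma dens k : forall x, 0 <= x <= 1 -> exists m : Z,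
  0 <= IZR m /\ IZR m + 1 <= 3^k /\ IZR m <= x * 3^k <= IZR m + 1.
Proof.
  induction k; intros x Hx.
  - exists 0%Z. simpl. lra.
  - destruct (IHk x Hx) as [m [H1 [H2 H3]]]. simpl pow.
    destruct (Rle_dec (x * (3 * 3^k)) (3 * IZR m + 1)).
    + exists (3*m)%Z. rewrite mult_IZR. simpl IZR. lra.
    + destruct (Rle_dec (x * (3 * 3^k)) (3 * IZR m + 2)).
      * exists (3*m+1)%Z. rewrite plus_IZR, mult_IZR. simpl IZR. lra.
      * exists (3*m+2)%Z. rewrite plus_IZR, mult_IZR. simpl IZR. lra.
Qed.

Lemma pdist_eq p q : pdist p q = sqrt ((fst p - fst q) * (fst p - fst q) + (snd p - snd q) * (snd p - snd q)).
Proof. destruct p, q. reflexivity. Qed.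

Lemma pdist_fst p q : Rabs (fst p - fst q) <= pdist p q.
Proof.
  rewrite pdist_eq, <- sqrt_Rsqr_abs. apply sqrt_le_1_alt. unfold Rsqr.
  pose proof (Rle_0_sqr (snd p - snd q)). unfold Rsqr in H. lra.
Qed.

Lemma pdist_snd p q : Rabs (snd p - snd q) <= pdist p q.
Proof.
  rewrite pdist_eq, <- sqrt_Rsqr_abs. apply sqrt_le_1_alt. unfold Rsqr.
  pose proof (Rle_0_sqr (fst p - fst q)). unfold Rsqr in H. lra.
Qed.

Lemma pdist_ub p q : pdist p q <= Rabs (fst p - fst q) + Rabs (snd p - snd q).
Proof.
  rewrite pdist_eq. set (a := fst p - fst q). set (b := snd p - snd q).
  rewrite <- (sqrt_square (Rabs a + Rabs b)) by (pose proof (Rabs_pos a); pose proof (Rabs_pos b); lra).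
  apply sqrt_le_1_alt. pose proof (Rsqr_abs a). pose proof (Rsqr_abs b). unfold Rsqr in *.
  pose proof (Rabs_pos a); pose proof (Rabs_pos b). nra.
Qed.

Lemma pdist_pos p q : 0 <= pdist p q.
Proof. rewrite pdist_eq. apply sqrt_pos. Qed.

Lemma pdist_refl p : pdist p p = 0.
Proof. rewrite pdist_eq. replace (_ + _) with 0 by ring. apply sqrt_0. Qed.

Lemma pdist_x a b : pdist (a,0) (b,0) = Rabs (a - b).
Proof. rewrite pdist_eq. simpl. rewrite <- sqrt_Rsqr_abs. f_equal. unfold Rsqr. ring. Qed.

Lemma pdist_y a b c : pdist (a,b) (a,c) = Rabs (b - c).
Proof. rewrite pdist_eq. simpl. rewrite <- sqrt_Rsqr_abs. f_equal. unfold Rsqr. ring. Qed.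

Definition KK (p : pt) : Prop :=
  forall z, Rabs (z - fst p) <= Rabs (snd p) -> 0 <= z <= 1 /\ f z = f (fst p).
Definition FF (p : pt) : R := f (fst p).
Definition dFF (p : pt) : pt := (0, 0).
Definition gg (t : R) : pt := (t, 0).

Lemma KK_x p : KK p -> 0 <= fst p <= 1.
Proof. intros H. apply (H (fst p)). rewrite Rminus_diag, Rabs_R0. apply Rabs_pos. Qed.

Lemma KK_y p : KK p -> Rabs (snd p) <= 1/2.
Proof.
  intros H. destruct (H (fst p + Rabs (snd p))) as [A _].
  replace (fst p + Rabs (snd p) - fst p) with (Rabs (snd p)) by ring. rewrite Rabs_Rabsolu; lra.
  destruct (H (fst p - Rabs (snd p))) as [B _].
  replace (fst p - Rabs (snd p) - fst p) with (- Rabs (snd p)) by ring. rewrite Rabs_Ropp, Rabs_Rabsolu; lra.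
  lra.
Qed.

Lemma KK_closed : closed_set KK.
Proof.
  intros [x y] Hc z Hz. simpl in *.
  assert (approx : forall d, 0 < d -> exists z' u, Rabs (z' - z) < 2*d /\ Rabs (u - x) < d /\
             0 <= z' <= 1 /\ f z' = f u).
  { intros d Hd. destruct (Hc d Hd) as [[u v] [Hq Hpd]].
    pose proof (pdist_fst (u,v) (x,y)) as H1. pose proof (pdist_snd (u,v) (x,y)) as H2. simpl in *.
    set (w := u + (z - x)).
    set (z' := Rmax (u - Rabs v) (Rmin (u + Rabs v) w)).
    assert (Hz'u : Rabs (z' - u) <= Rabs v).
    { unfold z', Rmax, Rmin. pose proof (Rabs_pos v). repeat destruct Rle_dec; rabs_elim; lra. }
    destruct (Hq z' Hz'u) as [A B]. simpl in *.
    exists z', u. repeat split; try lra.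
    unfold z', w, Rmax, Rmin in *. repeat destruct Rle_dec; rabs_elim; lra. }
  assert (Z01 : 0 <= z <= 1).
  { split.
    - destruct (Rle_dec 0 z); auto. destruct (approx (-z/2)) as [z' [u [A [B [C D]]]]]. lra.
      rabs_elim; lra.
    - destruct (Rle_dec z 1); auto. destruct (approx ((z-1)/2)) as [z' [u [A [B [C D]]]]]. lra.
      rabs_elim; lra. }
  split; auto.
  assert (Rabs (f z - f x) <= 0).
  { apply le_eps. intros e He. destruct (f_cont (e/2)) as [d [Hd Hf]]. lra.
    destruct (approx (d/2)) as [z' [u [A [B [C D]]]]]. lra.
    assert (Rabs (f z' - f z) < e/2) by (apply Hf; lra).
    assert (Rabs (f u - f x) < e/2) by (apply Hf; lra).
    rabs_elim; lra. }
  pose proof (Rabs_pos (f z - f x)). rabs_elim; lra.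
Qed.

Lemma KK_bounded : bounded_set KK.
Proof.
  exists 2. intros p Hp. pose proof (KK_x p Hp). pose proof (KK_y p Hp).
  pose proof (pdist_ub p (0,0)). unfold pdist in H1.
  replace (psub p (0,0)) with p in H1 by (destruct p; unfold psub; simpl; f_equal; ring).
  simpl in H1. rewrite !Rminus_0_r in H1. rabs_elim; lra.
Qed.

Lemma interior_KK_const p : interior KK p -> exists d, 0 < d /\
  forall q, pdist q p < d -> f (fst q) = f (fst p).
Proof.
  intros [e [He H]]. destruct p as [x y].
  set (v := if Rle_dec 0 y then y + e/2 else y - e/2).
  assert (Hv : Rabs (v - y) = e/2 /\ e/2 <= Rabs v).
  { unfold v. destruct Rle_dec; rabs_elim; lra. }
  assert (HK : KK (x, v)). { apply H. rewrite pdist_y. lra. }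
  exists (e/2). split. lra. intros q Hq. pose proof (pdist_fst q (x,y)). simpl in *.
  assert (Hz : Rabs (fst q - fst (x, v)) <= Rabs (snd (x, v))) by (simpl; lra).
  destruct (HK (fst q) Hz) as [_ E]. simpl in E. auto.
Qed.

Lemma interior_sub p : interior KK p -> KK p.
Proof. intros [e [He H]]. apply H. rewrite pdist_refl. auto. Qed.

Lemma mid_const N (m : Z) z : 0 <= IZR m -> IZR m + 1 <= 3^N ->
  Rabs (z - (3 * IZR m + 3/2) / (3 * 3^N)) < 1 / (6 * 3^N) ->
  0 <= z <= 1 /\ f z = f ((3 * IZR m + 1) / 3^(S N)).
Proof.
  intros M1 M2 H. assert (HP : 0 < 3^N) by (apply pow_lt; lra).
  set (c := (3 * IZR m + 3/2) / (3 * 3^N)) in *.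
  assert (E : z * (3 * 3^N) = (z - c) * (3 * 3^N) + (3 * IZR m + 3/2)) by (unfold c; field; lra).
  assert (B : Rabs ((z - c) * (3 * 3^N)) < 1/2).
  { rewrite Rabs_mult, (Rabs_pos_eq (3*3^N)) by lra.
    replace (1/2) with (1 / (6 * 3^N) * (3 * 3^N)) by (field; lra).
    apply Rmult_lt_compat_r; lra. }
  assert (Z1 : 3 * IZR m + 1 <= z * (3 * 3^N) <= 3 * IZR m + 2) by (rabs_elim; lra).
  split.
  - split.
    + apply (Rmult_le_reg_r (3*3^N)). lra. lra.
    + apply (Rmult_le_reg_r (3*3^N)). lra. lra.
  - apply MT. simpl pow. lra.
Qed.

Lemma KK_top : top_regular KK.
Proof.
  intros [x y]. split.
  - intros Hp e He.
    destruct (Req_dec y 0) as [Hy|Hy].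
    + subst y. pose proof (KK_x _ Hp) as Hx. simpl in Hx.
      destruct (small_pow_all e He) as [N HN]. specialize (HN N (le_n _)).
      destruct (dens N x Hx) as [m [M1 [M2 M3]]].
      assert (HP : 0 < 3^N) by (apply pow_lt; lra).
      assert (H32 : 1/3^N <= (1/2)^N).
      { apply (Rmult_le_reg_l (3^N)). auto.
        replace (3^N * (1/3^N)) with 1 by (field; lra).
        rewrite <- Rpow_mult_distr. apply pow_R1_Rle. lra. }
      set (c := (3 * IZR m + 3/2) / (3 * 3^N)).
      exists (c, 0). split.
      * exists (1 / (12 * 3^N)). split. apply Rdiv_lt_0_compat; lra.
        intros [u v] Huv. pose proof (pdist_fst (u,v) (c,0)). pose proof (pdist_snd (u,v) (c,0)).
        simpl in *.
        assert (Hr : 1 / (12 * 3^N) = (1 / (6 * 3^N)) / 2) by (field; lra).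
        assert (0 < 1 / (6 * 3^N)) by (apply Rdiv_lt_0_compat; lra).
        rewrite Rminus_0_r in H0.
        assert (Hu' : Rabs (u - c) < 1/(6*3^N)) by lra.
        destruct (mid_const N m u M1 M2 Hu') as [_ Hu].
        intros z Hz. simpl in Hz.
        assert (Hz' : Rabs (z - c) < 1/(6*3^N)).
        { pose proof (Rabs_triang (z - u) (u - c)). replace (z - u + (u - c)) with (z - c) in H2 by ring. lra. }
        destruct (mid_const N m z M1 M2 Hz') as [Z1 Hz2].
        split; auto. simpl. congruence.
      * rewrite pdist_x.
        assert (E : (c - x) * 3^N = IZR m + 1/2 - x * 3^N) by (unfold c; field; lra).
        assert (Rabs ((c - x) * 3^N) <= 1/2) by (rewrite E; rabs_elim; lra).
        rewrite Rabs_mult, (Rabs_pos_eq (3^N)) in H by lra.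
        assert (Rabs (c - x) <= 1/2 * (1/3^N)).
        { apply (Rmult_le_reg_r (3^N)). auto. replace (1/2 * (1/3^N) * 3^N) with (1/2) by (field; lra). auto. }
        assert (0 < 1/3^N) by (apply Rdiv_lt_0_compat; lra). lra.
    + set (s := Rmin (1/2) (e / (2 * Rabs y))).
      assert (Hy0 : 0 < Rabs y) by (apply Rabs_pos_lt; auto).
      assert (Hs : 0 < s <= 1/2 /\ s * Rabs y <= e/2).
      { unfold s, Rmin. destruct Rle_dec. split. lra.
        apply (Rmult_le_reg_r (/ Rabs y)). apply Rinv_0_lt_compat; lra.
        replace (1/2 * Rabs y * / Rabs y) with (1/2) by (field; lra).
        replace (e/2 * / Rabs y) with (e / (2 * Rabs y)) by (field; lra). lra.
        split. split. apply Rdiv_lt_0_compat; lra. lra.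
        replace (e / (2 * Rabs y) * Rabs y) with (e/2) by (field; lra). lra. }
      exists (x, y * (1 - s)). split.
      * exists (s * Rabs y / 2). split. nra.
        intros [u v] Huv. pose proof (pdist_fst (u,v) (x, y * (1 - s))). pose proof (pdist_snd (u,v) (x, y * (1-s))).
        simpl in *.
        assert (Ay : Rabs (y * (1 - s)) = Rabs y * (1 - s)) by (rewrite Rabs_mult, (Rabs_pos_eq (1-s)); lra).
        assert (Hv : Rabs v <= Rabs y * (1 - s) + s * Rabs y / 2).
        { pose proof (Rabs_triang_inv v (y * (1-s))). lra. }
        assert (Hu : Rabs (u - x) <= Rabs y) by nra.
        intros z Hz. simpl in Hz.
        assert (Hzx : Rabs (z - x) <= Rabs y).
        { pose proof (Rabs_triang (z - u) (u - x)). replace (z - u + (u - x)) with (z - x) in H1 by ring. nra. }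
        destruct (Hp z Hzx) as [Z1 Z2]. destruct (Hp u Hu) as [_ U2]. simpl in *. split; auto. congruence.
      * rewrite pdist_y. replace (y * (1 - s) - y) with (- (s * y)) by ring.
        rewrite Rabs_Ropp, Rabs_mult, (Rabs_pos_eq s) by lra. lra.
  - intros Hc. apply KK_closed. intros e He. destruct (Hc e He) as [q [Hq Hd]].
    exists q. split; auto. apply interior_sub; auto.
Qed.

Lemma rsum_zero n : rsum (fun _ => 0) n = 0.
Proof. induction n; simpl; auto. rewrite IHn; ring. Qed.

Lemma rsum_ext (a b : nat -> R) n : (forall i, (i < n)%nat -> a i = b i) -> rsum a n = rsum b n.
Proof. induction n; simpl; intros H; auto. rewrite IHn by (intros; apply H; lia). rewrite H by lia. auto. Qed.

Lemma rsum_tele (t : nat -> R) n : rsum (fun i => t (S i) - t i) n = t n - t O.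
Proof. induction n; simpl. ring. rewrite IHn. ring. Qed.

Lemma bern k : 1 + INR k / 2 <= (3/2)^k.
Proof.
  induction k. simpl. lra. rewrite S_INR. simpl pow.
  assert (0 <= INR k) by apply pos_INR. nra.
Qed.

Lemma KK_C1_int : C1_int KK FF dFF.
Proof.
  repeat split.
  - intros x Hx e He. destruct (interior_KK_const x Hx) as [d [Hd H]]. exists d. split; auto.
    intros y Hyx Hyd. unfold FF, dFF. rewrite (H y Hyd). unfold inner. simpl.
    match goal with |- Rabs ?a <= _ => replace a with 0 by ring end.
    rewrite Rabs_R0. pose proof (pdist_pos y x). nra.
  - intros x _ e He. exists 1. split. lra. intros. unfold dFF. rewrite pdist_refl. auto.
  - intros x _ e He. destruct (f_cont e He) as [d [Hd H]]. exists d. split; auto.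
    intros y _ Hy. unfold FF. apply H. pose proof (pdist_fst y x). lra.
  - intros x _ e He. exists 1. split. lra. intros. unfold dFF. rewrite pdist_refl. auto.
Qed.

Lemma KK_notC1 : ~ C1_on KK FF.
Proof.
  intros [df [_ W]].
  assert (K0 : KK (0,0)).
  { intros z Hz. simpl in Hz. pose proof (Rabs_pos (z - 0)).
    assert (z = 0) by (rabs_elim; lra). subst. split. lra. auto. }
  destruct (W (0,0) K0 1 ltac:(lra)) as [d [Hd H]].
  set (a := fst (df (0,0))). set (b := snd (df (0,0))).
  destruct (small_pow_all d Hd) as [N1 HN1].
  destruct (archimed (2 * (Rabs a + 1))) as [Hup _].
  set (N2 := Z.to_nat (up (2 * (Rabs a + 1)))).
  assert (HN2 : 2 * (Rabs a + 1) < INR N2).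
  { unfold N2. rewrite INR_IZR_INZ, Z2Nat.id. lra.
    apply le_IZR. pose proof (Rabs_pos a). lra. }
  set (k := Nat.max N1 N2).
  assert (Hk1 : (1/2)^k < d) by (apply HN1; lia).
  assert (Hk2 : INR N2 <= INR k) by (apply le_INR; lia).
  pose proof (bern k) as Hb.
  assert (Hq : 0 < (1/3)^k) by (apply pow_lt; lra).
  assert (Hq2 : (1/3)^k <= (1/2)^k) by (apply pow_incr; lra).
  assert (KQ : KK ((1/3)^k, 0)).
  { intros z Hz. simpl in Hz. pose proof (Rabs_pos (z - (1/3)^k)).
    assert (z = (1/3)^k) by (rabs_elim; lra). subst. split; auto.
    pose proof (pow_le1 (1/3) k). lra. }
  assert (Hne : ((1/3)^k, 0) <> (0,0)). { intros E. injection E. lra. }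
  assert (Hdist : pdist ((1/3)^k, 0) (0,0) < d).
  { rewrite pdist_x, Rminus_0_r, Rabs_pos_eq; lra. }
  specialize (H _ KQ Hne Hdist).
  rewrite pdist_x in H. rewrite (Rminus_0_r ((1/3)^k)) in H.
  rewrite (Rabs_pos_eq ((1/3)^k)) in H by lra.
  unfold FF, inner, psub in H. simpl in H. fold a b in H.
  rewrite f_third in H. rewrite (f_le0 0) in H by lra.
  assert (E : (1/2)^k = (3/2)^k * (1/3)^k) by (rewrite <- Rpow_mult_distr; f_equal; field).
  rewrite E in H.
  assert (a <= Rabs a) by apply RRle_abs.
  assert ((3/2)^k * (1/3)^k - a * (1/3)^k <= 1 * (1/3)^k).
  { replace ((3/2)^k * (1/3)^k - a * (1/3)^k) with ((3/2)^k * (1/3)^k - 0 - (a * ((1/3)^k - 0) + b * (0 - 0))) by ring.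
    eapply Rle_trans. apply RRle_abs. auto. }
  nra.
Qed.

Theorem mainTheorem4 :
  exists (K : pt -> Prop) (F : pt -> R) (dF : pt -> pt),
    compact_set K /\ top_regular K /\
    C1_int K F dF /\ ~ C1_on K F /\
    exists g : R -> pt,
      (forall t, 0 <= t <= 1 -> K (g t)) /\ rectifiable g /\
      path_integral_is dF g 0 /\ F (g 1) - F (g 0) = 1.
Proof.
  exists KK, FF, dFF. split. split. apply KK_closed. apply KK_bounded.
  split. apply KK_top. split. apply KK_C1_int. split. apply KK_notC1.
  exists gg. split.
  - intros t Ht z Hz. unfold gg in *. simpl in *. pose proof (Rabs_pos (z - t)).
    assert (z = t) by (rabs_elim; lra). subst. split; auto.
  - split. split.
    + intros t _ e He. exists e. split; auto. intros s _ Hs. unfold gg. rewrite pdist_x. auto.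
    + exists 1. intros t n [T0 [T1 T2]]. unfold gg.
      rewrite (rsum_ext _ (fun i => t (S i) - t i)). rewrite rsum_tele. lra.
      intros i Hi. rewrite pdist_x. apply Rabs_pos_eq. specialize (T2 i Hi). lra.
    + split.
      * intros e He. exists 1. split. lra. intros t tau n _ _ _.
        rewrite (rsum_ext _ (fun _ => 0)). rewrite rsum_zero. rewrite Rminus_0_r, Rabs_R0. auto.
        intros i _. unfold dFF, inner. simpl. ring.
      * unfold FF, gg. simpl. rewrite f_ge1, f_le0; lra.
Qed.
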